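(* Let $A=(A_{ij})$ be a real symmetric $n\times n$ matrix with eigenvalues $\lambda_1(A),\dots,\lambda_n(A)$, and let $$\mu=\frac1n\sum_{i=1}^n\lambda_i(A),\qquad \sigma^2=\frac1n\sum_{i=1}^n(\lambda_i(A)-\mu)^2,$$ with $\sigma>0$. If for some integer $k$ with $1\le k<n/2$ $$\frac1n\sum_{i\neq j}A_{ij}\ge\sigma\sqrt{\frac{(n-k)^2+k^2}{n}},$$ then the largest (rightmost) eigenvalue of $A$ is simple, and a corresponding eigenvector can be chosen (up to sign) so that it has at least $n-k+1$ nonnegative entries. *)

(* Defs.v *)
From HB Require Import structures.
From mathcomp Require Import all_boot all_order all_algebra.
Set Implicit Arguments. Unset Strict Implicit. Unset Printing Implicit Defensive.
Import Order.TTheory GRing.Theory Num.Theory.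
Local Open Scope ring_scope.

Definition eigenvalue_list (R : rcfType) (n : nat) (A : 'M[R]_n) (lam : 'I_n -> R) :=
  char_poly A = \prod_(i < n) ('X - (lam i)%:P).

Definition spec_mean (R : rcfType) (n : nat) (lam : 'I_n -> R) : R :=
  n%:R^-1 * \sum_(i < n) lam i.

Definition spec_var (R : rcfType) (n : nat) (lam : 'I_n -> R) : R :=
  n%:R^-1 * \sum_(i < n) (lam i - spec_mean lam) ^+ 2.

(* Main.v *)
Require Import Defs.
From HB Require Import structures.
From mathcomp Require Import all_boot all_order all_algebra.
From mathcomp Require Import all_fingroup complex ring lra zify.
Import Order.TTheory GRing.Theory Num.Theory.
Local Open Scope ring_scope.
Set Implicit Arguments. Unset Strict Implicit. Unset Printing Implicit Defensive.

Section Real.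
Variable R : rcfType.

Lemma exists_max (I : finType) (P : pred I) (F : I -> R) (j : I) :
  P j -> exists i, P i /\ forall j, P j -> F j <= F i.
Proof.
move=> Pj; case: (@arg_maxP _ _ I j P F Pj) => i Pi Hi.
by exists i; split.
Qed.

Lemma CS (I : finType) (P : pred I) (a b : I -> R) :
  (\sum_(i | P i) a i * b i) ^+ 2 <=
  (\sum_(i | P i) a i ^+ 2) * (\sum_(i | P i) b i ^+ 2).
Proof.
set A := \sum_(i | P i) a i ^+ 2; set B := \sum_(i | P i) b i ^+ 2.
set S := \sum_(i | P i) a i * b i.
have B0 : 0 <= B by apply: sumr_ge0 => i _; exact: sqr_ge0.
have [Bz|Bp] := eqVneq B 0.
  have bz : forall i, P i -> b i = 0.
    move=> i Pi; apply/eqP; rewrite -sqrf_eq0; apply/eqP.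
    by move/eqP: Bz; rewrite psumr_eq0 => [/allP /(_ i) |i' _]; [rewrite mem_index_enum Pi => /(_ isT) /implyP /(_ isT) /eqP|exact: sqr_ge0].
  have -> : S = 0 by rewrite /S big1 // => i Pi; rewrite bz // mulr0.
  by rewrite Bz expr0n /= mulr0.
have Bpos : 0 < B by rewrite lt_def Bp B0.
have H : 0 <= \sum_(i | P i) (a i * B - b i * S) ^+ 2.
  by apply: sumr_ge0 => i _; exact: sqr_ge0.
have E : \sum_(i | P i) (a i * B - b i * S) ^+ 2 = B * (A * B - S ^+ 2).
  rewrite (eq_bigr (fun i => a i ^+ 2 * B ^+ 2 - (a i * b i) * (2 * B * S) + b i ^+ 2 * S ^+ 2)); last first.
    by move=> i _; ring.
  rewrite big_split sumrB /= -!mulr_suml -/A -/B -/S; ring.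
rewrite E in H.
have : 0 <= A * B - S ^+ 2 by rewrite -(pmulr_rge0 _ Bpos).
by rewrite subr_ge0 mulrC.
Qed.

Lemma CS1 (I : finType) (P : pred I) (a : I -> R) :
  (\sum_(i | P i) a i) ^+ 2 <= (\sum_(i | P i) 1) * (\sum_(i | P i) a i ^+ 2).
Proof.
have := CS P (fun _ => 1) a.
by under eq_bigr do rewrite mul1r; under [\sum_(i | P i) 1 ^+ 2]eq_bigr do rewrite expr1n.
Qed.

Lemma sq_sum_le (I : finType) (P : pred I) (x : I -> R) :
  (forall i, P i -> 0 <= x i) ->
  \sum_(i | P i) x i ^+ 2 <= (\sum_(i | P i) x i) ^+ 2.
Proof.
move=> x0; rewrite expr2 mulr_suml; apply: ler_sum => i Pi.
rewrite expr2 ler_wpM2l ?x0 //.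
rewrite (bigD1 i) //= lerDl; apply: sumr_ge0 => j /andP[Pj _]; exact: x0.
Qed.

End Real.

Lemma main_real (R : rcfType) (n k : nat) (e w : 'I_n -> R) :
  (1 <= k)%N -> (k.*2 < n)%N -> (forall i, 0 <= w i) -> \sum_i w i = n%:R ->
  0 < \sum_i (e i - n%:R^-1 * \sum_j e j) ^+ 2 ->
  0 < \sum_i e i * w i - \sum_i e i ->
  (\sum_i (e i - n%:R^-1 * \sum_j e j) ^+ 2) * ((n%:R - k%:R) ^+ 2 + k%:R ^+ 2)
     <= (\sum_i e i * w i - \sum_i e i) ^+ 2 ->
  exists i0, (forall j, j != i0 -> e j < e i0) /\ n%:R - k%:R < w i0.
Proof.
move=> k1 kn w0 sw.
set mu := n%:R^-1 * _; set V := \sum_i _; set s := _ - _.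
move=> V0 s0 Hs.
have n0 : (0 < n)%N by apply: leq_ltn_trans kn.
have nR0 : (0 : R) < n%:R by rewrite ltr0n.
have knR : k%:R * 2 < n%:R :> R by rewrite -natrM ltr_nat muln2.
have k1R : 1 <= k%:R :> R by rewrite ler1n.
pose beta i := e i - mu.
have sbeta : \sum_i beta i = 0.
  rewrite /beta sumrB sumr_const card_ord /mu -[X in _ - X]mulr_natr.
  by rewrite mulrAC mulVf ?mul1r ?subrr // gt_eqF.
have sE : s = \sum_i beta i * w i.
  rewrite /s /beta [RHS](eq_bigr (fun i => e i * w i - mu * w i)); last by move=> i _; ring.
  rewrite sumrB -mulr_sumr sw /mu mulrAC mulVf ?mul1r //; by rewrite gt_eqF.
have sE2 : s = \sum_i beta i * (w i - 1).
  rewrite sE [RHS](eq_bigr (fun i => beta i * w i - beta i)); last by move=> i _; ring.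
  by rewrite sumrB sbeta subr0.
have [i0 [_ Hi0]] := @exists_max R _ predT e (Ordinal n0) isT.
have : (0 < #|[pred j : 'I_n | j != i0]|)%N.
  by rewrite cardC1 card_ord; move: k1 kn; lia.
case/card_gt0P => j0; rewrite inE => j0i0.
have [j1 [j1i0 Hj1]] := @exists_max R _ [pred j | j != i0] e j0 j0i0.
rewrite /= in j1i0.
set b1 := beta i0; set b2 := beta j1; set W := w i0.
have b21 : b2 <= b1 by rewrite /b1 /b2 /beta lerB // Hi0.
have sw' : \sum_(j | j != i0) w j = n%:R - W.
  by rewrite -sw [in RHS](bigD1 i0) //= /W; ring.
have F1 : s <= b1 * W + b2 * (n%:R - W).
  rewrite sE (bigD1 i0) //= lerD2l -sw' mulr_sumr; apply: ler_sum => j ji0.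
  by rewrite ler_wpM2r // /beta lerB // Hj1.
have N2E : \sum_(j | (j != i0) && (j != j1)) (1 : R) = n%:R - 2.
  have H : \sum_(i < n) (1:R) = n%:R by rewrite sumr_const card_ord.
  by move: H; rewrite (bigD1 i0) //= (bigD1 j1) //= => <-; ring.
have TE : \sum_(j | (j != i0) && (j != j1)) beta j = - (b1 + b2).
  by move: sbeta; rewrite (bigD1 i0) //= (bigD1 j1) //= -/b1 -/b2 => H; lra.
have VE : V = b1 ^+ 2 + b2 ^+ 2 + \sum_(j | (j != i0) && (j != j1)) beta j ^+ 2.
  by rewrite /V (bigD1 i0) //= (bigD1 j1) //= addrA.
have F2 : (b1 + b2) ^+ 2 * n%:R <= 2 * V * (n%:R - 2).
  have := CS1 [pred j | (j != i0) && (j != j1)] beta.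
  rewrite /= N2E TE VE.
  set Q := \sum_(j | _) _.
  have n2 : 0 <= n%:R - 2 :> R by lra.
  have := mulr_ge0 (sqr_ge0 (b1 - b2)) n2.
  nra.
have [Hc|Hc] := boolP ((b2 == b1) || (W <= n%:R / 2)).
  exfalso.
  have H1 : s <= (b1 + b2) * n%:R / 2.
    case/orP: Hc => [/eqP e21|HW].
      by move: F1; rewrite e21; lra.
    have Hp : 0 <= (b1 - b2) * (n%:R / 2 - W) by apply: mulr_ge0; rewrite subr_ge0.
    nra.
  move: Hs; set c2 := (n%:R - k%:R) ^+ 2 + k%:R ^+ 2 => Hs.
  have H2 : s ^+ 2 <= ((b1 + b2) * n%:R / 2) ^+ 2.
    rewrite -subr_ge0 subr_sqr; apply: mulr_ge0; lra.
  have H3 : ((b1 + b2) * n%:R / 2) ^+ 2 <= V * (n%:R * (n%:R - 2) / 2).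
    have : ((b1 + b2) * n%:R / 2) ^+ 2 = (b1 + b2) ^+ 2 * n%:R * (n%:R / 4) by field.
    move=> ->; have : (b1 + b2) ^+ 2 * n%:R * (n%:R / 4) <= 2 * V * (n%:R - 2) * (n%:R / 4).
      by rewrite ler_wpM2r // divr_ge0 // ltW.
    move=> H; apply: le_trans H _; rewrite le_eqVlt; apply/orP; left; apply/eqP; by field.
  have Hc2 : 0 < c2 - n%:R * (n%:R - 2) / 2.
    have -> : c2 - n%:R * (n%:R - 2) / 2 = ((n%:R - k%:R * 2) ^+ 2 + 2 * n%:R) / 2.
      by rewrite /c2; field.
    apply: divr_gt0 => //; apply: ltr_wpDl; [exact: sqr_ge0|]; lra.
  have := mulr_gt0 V0 Hc2; rewrite mulrBr subr_gt0; lra.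
have [b12 HW2] := norP Hc; rewrite -ltNge in HW2.
have b12' : b2 < b1 by rewrite lt_neqAle b12 b21.
exists i0; split.
  move=> j ji0; apply: le_lt_trans (Hj1 j ji0) _.
  by move: b12'; rewrite /b1 /b2 /beta ltrD2r.
rewrite -/W ltNge; apply/negP => HW.
have F3 : s ^+ 2 <= V * \sum_i (w i - 1) ^+ 2.
  by rewrite sE2; exact: (CS predT beta (fun i => w i - 1)).
have F4 : \sum_i (w i - 1) ^+ 2 = \sum_i w i ^+ 2 - n%:R.
  rewrite [LHS](eq_bigr (fun i => (w i ^+ 2 - 2 * w i) + 1)); last by move=> i _; ring.
  rewrite big_split sumrB -mulr_sumr sw sumr_const card_ord /=; ring.
have F5 : \sum_i w i ^+ 2 <= W ^+ 2 + (n%:R - W) ^+ 2.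
  rewrite (bigD1 i0) //= lerD2l -sw'; exact: sq_sum_le.
move: Hs; set c2 := (n%:R - k%:R) ^+ 2 + k%:R ^+ 2 => Hs.
have G : W ^+ 2 + (n%:R - W) ^+ 2 <= c2.
  have : 0 <= (n%:R - k%:R - W) * (W - k%:R) by apply: mulr_ge0; lra.
  move=> H; rewrite /c2; nra.
have G2 : s ^+ 2 <= V * (c2 - n%:R).
  apply: (le_trans F3); rewrite F4; apply: ler_wpM2l; [exact: ltW | lra].
have : 0 < V * n%:R by exact: mulr_gt0.
rewrite mulrBr in G2; lra.
Qed.

Lemma char_poly_conj (F : fieldType) n (P Q M : 'M[F]_n) :
  Q *m P = 1%:M -> char_poly (Q *m M *m P) = char_poly M.
Proof.
move=> QP.
have E : char_poly_mx (Q *m M *m P) =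
   map_mx polyC Q *m char_poly_mx M *m map_mx polyC P.
  have QP' : map_mx polyC Q *m map_mx polyC P = 1%:M by rewrite -map_mxM QP map_mx1.
  rewrite /char_poly_mx mulmxBr mulmxBl !map_mxM; congr (_ - _).
  by rewrite scalar_mxC -mulmxA QP' mulmx1.
rewrite /char_poly E !det_mulmx mulrC mulrA -det_mulmx -map_mxM.
have PQ : P *m Q = 1%:M by apply: mulmx1C.
by rewrite PQ map_mx1 det1 mul1r.
Qed.

Section Herm.
Variable C : numClosedFieldType.
Local Open Scope sesquilinear_scope.

Lemma quad_diagE n (u v : 'cV[C]_n) (d : 'rV[C]_n) :
  (u ^t* *m diag_mx d *m v) 0 0 = \sum_i (u i 0)^* * d 0 i * v i 0.
Proof.
rewrite mxE; apply: eq_bigr => i _; rewrite mul_mx_diag !mxE.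
done.
Qed.

Lemma dotE n (u v : 'cV[C]_n) :
  (u ^t* *m v) 0 0 = \sum_i (u i 0)^* * v i 0.
Proof. by rewrite mxE; apply: eq_bigr => i _; rewrite !mxE. Qed.

Lemma trCmul m n p (M : 'M[C]_(m, n)) (N : 'M[C]_(n, p)) :
  (M *m N) ^t* = N ^t* *m M ^t*.
Proof. by rewrite trmx_mul map_mxM. Qed.

End Herm.

Section Lin.
Variable R : rcfType.
Local Notation C := R[i].
Local Open Scope sesquilinear_scope.
Let toC : {rmorphism R -> C} := real_complex R.

Lemma toC_real (x : R) : toC x \is Num.real.
Proof. by rewrite /toC /= complex_real. Qed.

Lemma conj_toC (x : R) : (toC x)^* = toC x.
Proof. exact/conj_Creal/toC_real. Qed.

Lemma spectral_facts n (A : 'M[R]_n) (lam : 'I_n -> R) :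
  A^T = A -> char_poly A = \prod_(i < n) ('X - (lam i)%:P) ->
  exists (p : 'S_n) (e w : 'I_n -> R),
  [/\ forall i, lam i = e (p i),
      forall i, 0 <= w i,
      \sum_i w i = n%:R,
      \sum_i \sum_j A i j = \sum_i e i * w i /\ \sum_i A i i = \sum_i e i &
      forall i0 (x : 'rV[R]_n), (forall j, j != i0 -> e j != e i0) ->
        x *m A = e i0 *: x ->
        (\sum_j x 0 j) ^+ 2 = w i0 * \sum_j x 0 j ^+ 2].
Proof.
move=> sA cpA.
have Aij : forall i j, A i j = A j i by move=> i j; rewrite -{1}sA mxE.
set Ac := A ^ toC.
have Ah : Ac \is hermsymmx.
  apply/is_hermitianmxP; rewrite expr0 scale1r; apply/matrixP => i j.
  by rewrite !mxE conj_toC Aij.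
set P := spectralmx Ac; set d := spectral_diag Ac.
have Pu : P \is unitarymx := spectral_unitarymx Ac.
have AcE : Ac = P^t* *m diag_mx d *m P.
  by rewrite -invmx_unitary //; apply/orthomx_spectralP/hermitian_normalmx.
have PPt : P *m P^t* = 1%:M := unitarymxP Pu.
have PtP : P^t* *m P = 1%:M.
  by rewrite -invmx_unitary // mulVmx // unitarymx_unit.
have dreal := hermitian_spectral_diag_real Ah.
pose e i := complex.Re (d 0 i).
have dE : forall i, d 0 i = toC (e i).
  by move=> i; rewrite /e /toC /= RRe_real // (mxOverP dreal).
have cp1 : char_poly Ac = \prod_i ('X - (toC (lam i))%:P).
  by rewrite -map_char_poly cpA rmorph_prod; apply: eq_bigr => i _; exact: map_polyXsubC.
have cp2 : char_poly Ac = \prod_i ('X - (toC (e i))%:P).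
  rewrite AcE char_poly_conj // char_poly_trig ?diag_mx_is_trig //.
  by apply: eq_bigr => i _; rewrite mxE eqxx mulr1n dE.
have pe : perm_eq (map lam (enum 'I_n)) (map e (enum 'I_n)).
  apply: (perm_map_inj (@complexI R)); rewrite -!map_comp; apply: prod_XsubC_eq.
  rewrite !big_map.
  exact: (etrans (esym cp1) cp2).
have pe' : perm_eq (map lam (enum 'I_n)) [tuple e i | i < n].
  exact: pe.
have [p pE] := tuple_permP pe'.
have lamE : forall i, lam i = e (p i).
  move=> i; move: pE; rewrite /= => /eq_in_map /(_ i (mem_enum _ i)).
  by rewrite /= tnth_mktuple.
pose o : 'cV[C]_n := const_mx 1.
have oC : o ^t* = o^T.
  by apply/matrixP => i j; rewrite !mxE conjC1.
pose y := P *m o.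
pose w i := complex.Re ((y i 0)^* * y i 0).
have wE : forall i, toC (w i) = (y i 0)^* * y i 0.
  move=> i; rewrite /w /toC /= RRe_real //.
  by apply: ger0_real; rewrite mulrC -normCK; exact: exprn_ge0.
have w0 : forall i, 0 <= w i.
  move=> i; rewrite -ler0c; have -> : ((w i)%:C)%C = toC (w i) by [].
  by rewrite wE mulrC -normCK; exact: exprn_ge0.
have toCI : injective toC by exact: (@complexI R).
have sw : \sum_i w i = n%:R.
  apply: toCI; rewrite rmorph_sum rmorph_nat.
  under eq_bigr do rewrite wE.
  rewrite -dotE /y trCmul -mulmxA (mulmxA _ P) PtP mul1mx dotE.
  under eq_bigr do rewrite !mxE conjC1 mulr1.
  by rewrite sumr_const card_ord.
exists p, e, w; split => //.
  split.
    apply: toCI; rewrite rmorph_sum.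
    transitivity ((o^t* *m Ac *m o) 0 0).
      symmetry; rewrite oC mxE; under eq_bigr => j _ do rewrite mxE big_distrl /=.
      rewrite exchange_big /=; apply: eq_bigr => i _.
      rewrite rmorph_sum /=; apply: eq_bigr => j _.
      by rewrite !mxE mul1r mulr1.
    rewrite AcE -!mulmxA mulmxA -trCmul -/y mulmxA quad_diagE rmorph_sum /=.
    by apply: eq_bigr => i _; rewrite dE rmorphM /= wE; ring.
  apply: toCI; rewrite !rmorph_sum /=.
  transitivity (\tr Ac); first by apply: eq_bigr => i _; rewrite mxE.
  rewrite AcE mxtrace_mulC mulmxA PPt mul1mx mxtrace_diag.
  by apply: eq_bigr => i _; exact: dE.
move=> i0 x eneq xA.
pose xc := x^T ^ toC.
have Axc : Ac *m xc = toC (e i0) *: xc.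
  rewrite /Ac /xc -map_mxM -map_mxZ; congr (_ ^ _).
  by rewrite -{1}sA -trmx_mul xA linearZ.
pose z := P *m xc.
have Dz : diag_mx d *m z = toC (e i0) *: z.
  move/(congr1 (mulmx P)): Axc.
  by rewrite AcE !mulmxA PPt mul1mx -!mulmxA scalemxAr.
have z0 : forall i, i != i0 -> z i 0 = 0.
  move=> i ii0; have := Dz; move/matrixP => /(_ i 0); rewrite mul_diag_mx !mxE dE => H.
  apply/eqP; move/eqP: H; rewrite -subr_eq0 -mulrBl mulf_eq0 subr_eq0.
  case/orP => [/eqP/toCI H|//].
  by move: (eneq i ii0); rewrite H eqxx.
have oz : y^t* *m z = o^t* *m xc.
  by rewrite /y /z trCmul -mulmxA (mulmxA _ P) PtP mul1mx.
have Sx : toC (\sum_j x 0 j) = (y i0 0)^* * z i0 0.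
  transitivity ((o^t* *m xc) 0 0).
    rewrite dotE rmorph_sum; apply: eq_bigr => j _; rewrite !mxE conjC1 mul1r.
    done.
  rewrite -oz dotE (bigD1 i0) //= big1 ?addr0 // => j ji0.
  by rewrite z0 // mulr0.
have zz : z^t* *m z = xc^t* *m xc.
  by rewrite /z trCmul -mulmxA (mulmxA _ P) PtP mul1mx.
have Sx2 : toC (\sum_j x 0 j ^+ 2) = (z i0 0)^* * z i0 0.
  transitivity ((xc^t* *m xc) 0 0).
    rewrite dotE rmorph_sum; apply: eq_bigr => j _; rewrite !mxE conj_toC.
    by rewrite rmorphXn expr2.
  rewrite -zz dotE (bigD1 i0) //= big1 ?addr0 // => j ji0.
  by rewrite z0 // mulr0.
have SC : ((y i0 0)^* * z i0 0)^* = (y i0 0)^* * z i0 0 by rewrite -Sx conj_toC.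
apply: toCI; rewrite rmorphXn rmorphM Sx Sx2 wE.
transitivity (((y i0 0)^* * z i0 0) * ((y i0 0)^* * z i0 0)^*); first by rewrite SC expr2.
by rewrite [X in _ * X]rmorphM /= conjCK; ring.
Qed.
End Lin.

Lemma signcount (R : rcfType) (n k : nat) (x : 'I_n -> R) :
  (k <= n)%N -> 0 <= \sum_j x j ->
  (n%:R - k%:R) * \sum_j x j ^+ 2 < (\sum_j x j) ^+ 2 ->
  (n - k + 1 <= #|[set j | (0 <= x j)%R]|)%N.
Proof.
move=> kn S0 H.
rewrite leqNgt.
apply/negP => Hc.
move: Hc. set S := [set j | _ ]. move=> Hc.
have c : (#|S| <= n - k)%N by move: Hc; lia.
have cR : (#|S|%:R : R) <= n%:R - k%:R by rewrite -natrB // ler_nat.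
have e1 : \sum_j x j <= \sum_(j in S) x j.
  rewrite (bigID (fun j => j \in S)) /= -[X in _ <= X]addr0 lerD2l.
  by apply: sumr_le0 => j; rewrite inE -ltNge => /ltW.
have e2 : 0 <= \sum_(j in S) x j by apply: sumr_ge0 => j; rewrite inE.
have e3 := CS1 (fun j => j \in S) x.
have e4 : \sum_(j in S) (1 : R) = #|S|%:R by rewrite sumr_const.
have e5 : \sum_(j in S) x j ^+ 2 <= \sum_j x j ^+ 2.
  rewrite [X in _ <= X](bigID (fun j => j \in S)) /= lerDl.
  by apply: sumr_ge0 => j _; exact: sqr_ge0.
rewrite e4 in e3.
have e6 : 0 <= \sum_(j in S) x j ^+ 2 by apply: sumr_ge0 => j _; exact: sqr_ge0.
have e7 : (\sum_j x j) ^+ 2 <= (\sum_(j in S) x j) ^+ 2.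
  by rewrite -subr_ge0 subr_sqr; apply: mulr_ge0; lra.
have e8 : (#|S|%:R : R) * \sum_(j in S) x j ^+ 2 <= (n%:R - k%:R) * \sum_j x j ^+ 2.
  apply: le_trans (ler_wpM2r e6 cR) _; apply: ler_wpM2l; [apply: le_trans cR; exact: ler0n | exact: e5].
lra.
Qed.

Unset Implicit Arguments. Set Strict Implicit.

Theorem corollary8 (R : rcfType) (n k : nat) (A : 'M[R]_n) (lam : 'I_n -> R) :
  A^T = A ->
  eigenvalue_list A lam ->
  0 < Num.sqrt (spec_var lam) ->
  (1 <= k)%N -> (k.*2 < n)%N ->
  n%:R^-1 * (\sum_(i < n) \sum_(j < n | j != i) A i j)
    >= Num.sqrt (spec_var lam)
       * Num.sqrt (((n%:R - k%:R) ^+ 2 + k%:R ^+ 2) / n%:R) ->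
  exists i0 : 'I_n,
    (forall j : 'I_n, j != i0 -> lam j < lam i0) /\
    exists v : 'cV[R]_n,
      [/\ v != 0, A *m v = lam i0 *: v &
          (n - k + 1 <= #|[set i : 'I_n | (0 <= v i ord0)%R]|)%N].
Proof.
move=> sA cp sig0 k1 kn H.
have [p [e [w [lamE w0 sw [sumA trA] eig]]]] := spectral_facts sA cp.
have n0 : (0 < n)%N by apply: leq_ltn_trans kn.
have nR0 : (0 : R) < n%:R by rewrite ltr0n.
have reidx : forall F : R -> R, \sum_i F (lam i) = \sum_i F (e i).
  move=> F; rewrite [RHS](reindex_inj (@perm_inj _ p)).
  by apply: eq_bigr => i _; rewrite lamE.
set mu := n%:R^-1 * \sum_j e j.
set V := \sum_i (e i - mu) ^+ 2.
have varE : spec_var lam = n%:R^-1 * V.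
  rewrite /spec_var /spec_mean (reidx id) /V; congr (_ * _).
  exact: (reidx (fun t => (t - mu) ^+ 2)).
set s := \sum_i e i * w i - \sum_i e i.
have offE : \sum_(i < n) \sum_(j < n | j != i) A i j = s.
  rewrite /s -sumA -trA -sumrB; apply: eq_bigr => i _.
  by rewrite [in RHS](bigD1 i) //= addrC addrK.
rewrite offE varE in H; rewrite varE in sig0.
move: H; set c2 := (n%:R - k%:R) ^+ 2 + k%:R ^+ 2 => H.
have knR : k%:R * 2 < n%:R :> R by rewrite -natrM ltr_nat muln2.
have k1R : 1 <= k%:R :> R by rewrite ler1n.
have c20 : 0 < c2 by rewrite /c2; apply: ltr_wpDl; [exact: sqr_ge0| apply: exprn_gt0; lra].
have V0 : 0 < V.
  by move: sig0; rewrite sqrtr_gt0 pmulr_rgt0 // invr_gt0.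
have sq2 : 0 < Num.sqrt (c2 / n%:R) by rewrite sqrtr_gt0 divr_gt0.
have rhs0 := mulr_gt0 sig0 sq2.
have s0 : 0 < s.
  have := lt_le_trans rhs0 H; rewrite pmulr_rgt0 // invr_gt0 //.
have Hs : V * c2 <= s ^+ 2.
  have H2 : (Num.sqrt (n%:R^-1 * V) * Num.sqrt (c2 / n%:R)) ^+ 2 <= (n%:R^-1 * s) ^+ 2.
    by rewrite -subr_ge0 subr_sqr; apply: mulr_ge0; lra.
  have a0 : 0 <= n%:R^-1 * V by apply: mulr_ge0; [rewrite invr_ge0|]; apply: ltW.
  have b0 : 0 <= c2 / n%:R by apply: divr_ge0; apply: ltW.
  rewrite exprMn !sqr_sqrtr // in H2.
  have -> : V * c2 = n%:R ^+ 2 * (n%:R^-1 * V * (c2 / n%:R)) by field; rewrite gt_eqF.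
  have -> : s ^+ 2 = n%:R ^+ 2 * (n%:R^-1 * s) ^+ 2 by field; rewrite gt_eqF.
  by apply: ler_wpM2l; [apply: exprn_ge0; exact: ltW | exact: H2].
have [i0 [Hi0 Hw]] := main_real k1 kn w0 sw V0 s0 Hs.
pose j0 := (p^-1)%g i0.
have lj0 : lam j0 = e i0 by rewrite lamE /j0 permKV.
exists j0; split.
  move=> j jj0; rewrite lj0 lamE; apply: Hi0.
  by apply: contra jj0 => /eqP pj; rewrite /j0 -pj permK.
have : eigenvalue A (lam j0).
  rewrite eigenvalue_root_char cp /root horner_prod (bigD1 j0) //= hornerXsubC subrr mul0r.
  by [].
case/eigenvalueP => x xA x0.
rewrite lj0 in xA *.
have eneq : forall j, j != i0 -> e j != e i0 by move=> j /Hi0 /lt_eqF ->.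
have Heq := eig i0 x eneq xA.
have Sx20 : 0 < \sum_j x 0 j ^+ 2.
  rewrite lt_def sumr_ge0 ?andbT; last by move=> j _; exact: sqr_ge0.
  apply: contra x0; rewrite psumr_eq0; last by move=> j _; exact: sqr_ge0.
  move/allP => Hall; apply/eqP/rowP => j; rewrite mxE.
  by apply/eqP; rewrite -sqrf_eq0; apply: (implyP (Hall j (mem_index_enum j))).
have Hlt : (n%:R - k%:R) * \sum_j x 0 j ^+ 2 < (\sum_j x 0 j) ^+ 2.
  by rewrite Heq (ltr_pM2r Sx20).
have knn : (k <= n)%N by apply: leq_trans (ltnW kn); rewrite -addnn leq_addr.
have AxT : A *m x^T = e i0 *: x^T by rewrite -{1}sA -trmx_mul xA linearZ.
have [Sx|Sx] := leP 0 (\sum_j x 0 j).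
  exists x^T; split => //.
    by apply: contra x0 => /eqP H0; apply/eqP; apply: trmx_inj; rewrite H0 trmx0.
  have := signcount knn Sx Hlt.
  by congr (_ <= _)%N; apply: eq_card => j; rewrite !inE mxE.
exists (- x^T); split.
- by rewrite oppr_eq0; apply: contra x0 => /eqP H0; apply/eqP; apply: trmx_inj; rewrite H0 trmx0.
- by rewrite mulmxN AxT scalerN.
have Sx' : 0 <= \sum_j - x 0 j by rewrite sumrN oppr_ge0 ltW.
have Hlt' : (n%:R - k%:R) * \sum_j (- x 0 j) ^+ 2 < (\sum_j - x 0 j) ^+ 2.
  by under eq_bigr do rewrite sqrrN; rewrite sumrN sqrrN.
have := signcount knn Sx' Hlt'.
by congr (_ <= _)%N; apply: eq_card => j; rewrite !inE !mxE.
Qed.
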